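(* Let $\ell$ and $n$ be positive integers. For each positive integer $\ell'$, let $O_{n,\ell'}(\mathbb{Q})$ denote the set of $n\times n$ rational orthogonal matrices of level $\ell'$. Then $$\sum_{\ell'\mid \ell}\big|O_{n,\ell'}(\mathbb{Q})\big|\le (2n)^{\ell^2 n}.$$
   Context: A rational orthogonal matrix is an $n\times n$ matrix $Q$ with rational entries and $Q^\top Q=I$. The level of a rational matrix $M$ is the smallest positive integer $\ell$ such that $\ell M$ has integer entries. The sum ranges over all positive divisors $\ell'$ of $\ell$. *)

(* Defs.v *)
From HB Require Import structures.
From mathcomp Require Import all_boot all_order all_algebra.
From mathcomp Require Import boolp classical_sets cardinality.
Set Implicit Arguments. Unset Strict Implicit. Unset Printing Implicit Defensive.
Import Order.TTheory GRing.Theory Num.Theory.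
Local Open Scope ring_scope.

Definition int_mx (n : nat) (M : 'M[rat]_n) : Prop :=
  forall i j, M i j \is a Num.int.

Definition is_level (n : nat) (M : 'M[rat]_n) (ell : nat) : Prop :=
  (0 < ell)%N /\ int_mx (ell%:R *: M) /\
  (forall k : nat, (0 < k)%N -> int_mx (k%:R *: M) -> (ell <= k)%N).

Definition rat_orthogonal (n : nat) (Q : 'M[rat]_n) : Prop :=
  Q^T *m Q = 1%:M.

Definition O_level (n ell : nat) : set 'M[rat]_n :=
  [set Q | rat_orthogonal Q /\ is_level Q ell].
Arguments O_level : clear implicits.

(* Main.v *)
Require Import Defs.
From HB Require Import structures.
From mathcomp Require Import all_boot all_order all_algebra.
From mathcomp Require Import finmap boolp classical_sets cardinality.
From mathcomp Require Import zify.
Import Order.TTheory GRing.Theory Num.Theory.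

Module Helpers.
Set Implicit Arguments.
Local Open Scope ring_scope.

Definition fl (x : rat) : nat := `|Num.floor x|%N.

Lemma fl_sq (x : rat) : x \is a Num.int -> ((fl x ^ 2)%N)%:R = x ^+ 2.
Proof.
move=> /intrP [m ->]; rewrite /fl intrKfloor natrX natr_absz.
by rewrite intr_norm real_normK // num_real.
Qed.

Section Enc.
Variable n' : nat.
Local Notation n := n'.+1.

Definition aa (M : 'M[rat]_n) (i j : 'I_n) : nat := (fl (M i j) ^ 2)%N.
Definition colseq (M : 'M[rat]_n) (j : 'I_n) : seq ('I_n * bool) :=
  flatten [seq nseq (aa M i j) (i, 0 <= M i j) | i <- enum 'I_n].

Lemma colseq_size M j : size (colseq M j) = (\sum_i aa M i j)%N.
Proof.
rewrite /colseq size_flatten /shape -map_comp sumnE big_map big_enum /=.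
by apply: eq_bigr => i _; rewrite /= size_nseq.
Qed.

Lemma colseq_count M j i b :
  count_mem (i, b) (colseq M j) = (((0 <= M i j)%R == b) * aa M i j)%N.
Proof.
rewrite /colseq count_flatten -map_comp sumnE big_map big_enum /=.
rewrite (bigD1 i) //= big1 ?addn0.
  by rewrite count_nseq /= xpair_eqE eqxx /= eq_sym.
by move=> k ki; rewrite count_nseq /= xpair_eqE (negbTE ki).
Qed.

Lemma col_sum (ell : nat) (Q : 'M[rat]_n) j : rat_orthogonal Q ->
  \sum_i ((ell%:R *: Q) i j) ^+ 2 = (ell ^ 2)%N%:R.
Proof.
move=> /matrixP /(_ j j); rewrite !mxE eqxx /= => H.
under eq_bigr do rewrite mxE exprMn.
rewrite -mulr_sumr natrX; rewrite -[X in _ = X]mulr1; congr (_ * _).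
by apply: (etrans _ H); apply: eq_bigr => i _; rewrite !mxE expr2.
Qed.

Lemma colseq_size_ell (ell : nat) (Q : 'M[rat]_n) j : rat_orthogonal Q ->
  int_mx (ell%:R *: Q) -> size (colseq (ell%:R *: Q) j) = (ell ^ 2)%N.
Proof.
move=> oQ iQ; rewrite colseq_size; apply/eqP; rewrite -(eqr_nat rat) natr_sum.
rewrite -(col_sum ell j oQ); apply/eqP; apply: eq_bigr => i _.
by rewrite /aa fl_sq.
Qed.

Lemma sq_sign_inj (x y : rat) : x ^+ 2 = y ^+ 2 -> (0 <= x) = (0 <= y) -> x = y.
Proof.
move=> /eqP; rewrite eqf_sqr => /orP[/eqP //|/eqP ->] H.
have : y = 0.
  case: (lerP 0 y) H => [y0|y0]; rewrite oppr_ge0.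
    by move=> H; apply/eqP; rewrite eq_le y0 H.
  by move=> H; move: (ltW y0); rewrite H.
by move=> ->; rewrite oppr0.
Qed.

Lemma colseq_inj (M M' : 'M[rat]_n) j :
  (forall i, M i j \is a Num.int) -> (forall i, M' i j \is a Num.int) ->
  colseq M j = colseq M' j -> forall i, M i j = M' i j.
Proof.
move=> iM iM' E i.
have c1 := colseq_count M j i true; have c2 := colseq_count M j i false.
rewrite E colseq_count in c1; rewrite E colseq_count in c2.
have Ha : aa M i j = aa M' i j.
  move: c1 c2; case: (0 <= M i j); case: (0 <= M' i j) => //=;
    rewrite ?mul1n ?mul0n //; lia.
have Hsq : M i j ^+ 2 = M' i j ^+ 2 by rewrite -!fl_sq // -/(aa M i j) -/(aa M' i j) Ha.
have [a0|an0] := eqVneq (aa M i j) 0%N.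
  have : M i j ^+ 2 = 0 by rewrite -fl_sq // -/(aa M i j) a0.
  move/eqP; rewrite sqrf_eq0 => /eqP m0.
  by move: Hsq; rewrite m0 expr0n /= => /esym/eqP; rewrite sqrf_eq0 => /eqP.
apply: sq_sign_inj => //.
move: c1 c2; rewrite -Ha; case: (0 <= M i j); case: (0 <= M' i j) => //=;
  rewrite ?mul1n ?mul0n // => H1 H2; move/eqP: an0; lia.
Qed.

Definition Sset (ell : nat) : set 'M[rat]_n :=
  [set Q | rat_orthogonal Q /\ int_mx (ell%:R *: Q)].

Definition TT (ell : nat) := {ffun 'I_n -> (ell ^ 2).-tuple ('I_n * bool)}.

Definition enc (ell : nat) (Q : 'M[rat]_n) : TT ell :=
  [ffun j => insubd (nseq_tuple (ell ^ 2) (ord0, true)) (colseq (ell%:R *: Q) j)].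

Lemma enc_inj (ell : nat) (Q Q' : 'M[rat]_n) : (0 < ell)%N ->
  Sset ell Q -> Sset ell Q' -> enc ell Q = enc ell Q' -> Q = Q'.
Proof.
move=> ell0 [oQ iQ] [oQ' iQ'] E; apply/matrixP => i j.
have := congr1 (fun f : TT ell => val (f j)) E; rewrite /= !ffunE !val_insubd.
rewrite !colseq_size_ell // eqxx => /colseq_inj => /(_ (fun i => iQ i j) (fun i => iQ' i j) i).
rewrite !mxE => /mulfI; apply; by rewrite pnatr_eq0 -lt0n.
Qed.

Definition dec (ell : nat) (t : TT ell) : 'M[rat]_n :=
  if pselect (exists Q, Sset ell Q /\ enc ell Q = t) is left h
  then projT1 (cid h) else 0.

Lemma Sset_finite (ell : nat) : (0 < ell)%N -> finite_set (Sset ell).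
Proof.
move=> ell0; apply: (sub_finite_set _ (finite_image (@dec ell) (@finite_finset _ setT))).
move=> Q SQ; exists (enc ell Q) => //; rewrite /dec.
case: pselect => [h|]; last by move=> []; exists Q.
case: cid => Q' /= [SQ' E]; exact: enc_inj E.
Qed.

Lemma card_TT (ell : nat) : #|{: TT ell}| = ((2 * n) ^ (ell ^ 2 * n))%N.
Proof.
rewrite card_ffun card_tuple card_prod card_bool !card_ord -expnM; congr (_ ^ _)%N; apply: mulnC.
Qed.

Lemma O_sub (ell d : nat) : (d %| ell)%N -> (O_level n d `<=` Sset ell)%classic.
Proof.
move=> /dvdnP [k ->] Q [oQ [_ [iQ _]]]; rewrite /Sset /=; split => // i j.
rewrite natrM -scalerA mxE; apply: rpredM; first exact: rpred_nat.
exact: iQ.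
Qed.

Lemma level_uniq (Q : 'M[rat]_n) d1 d2 : is_level Q d1 -> is_level Q d2 -> d1 = d2.
Proof.
move=> [p1 [i1 m1]] [p2 [i2 m2]]; apply/eqP; rewrite eqn_leq.
by rewrite (m1 _ p2 i2) (m2 _ p1 i1).
Qed.
End Enc.
End Helpers.

Import Helpers.
Local Open Scope classical_set_scope.
Local Open Scope fset_scope.

Theorem mainTheorem3 (ell n : nat) (hell : (0 < ell)%N) (hn : (0 < n)%N) :
  (forall d : nat, d %| ell -> finite_set (O_level n d)) /\
  (\sum_(d <- divisors ell) #|` fset_set (O_level n d)| <= (2 * n) ^ (ell ^ 2 * n))%N.
Proof.
case: n hn => [//|n'] _.
have finO : forall d : nat, d %| ell -> finite_set (O_level n'.+1 d).
  by move=> d dE; apply: (sub_finite_set (O_sub _ dE)); apply: Sset_finite.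
split => //.
set F := fun d => fset_set (O_level n'.+1 d).
have key : forall r, uniq r -> {subset r <= divisors ell} ->
    (\sum_(d <- r) #|` F d| = #|` \bigcup_(d <- r) F d|)%N.
  elim => [|x r IH] /=; first by rewrite !big_nil cardfs0.
  move=> /andP[xr ur] sub.
  rewrite !big_cons cardfsU IH //; last by move=> y yr; apply: sub; rewrite inE yr orbT.
  suff -> : F x `&` \bigcup_(d <- r) F d = fset0 by rewrite cardfs0 subn0.
  have xd : x %| ell by rewrite dvdn_divisors // sub // inE eqxx.
  apply/fsetP => Q; rewrite in_fsetI in_fset0; apply/negbTE/negP => /andP[QA /bigfcupP [d /andP[dr _] QB]].
  have dd : d %| ell by rewrite dvdn_divisors // sub // inE dr orbT.
  move: QA QB; rewrite /F !in_fset_set; last by apply: finO.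
    2: by apply: finO.
  move=> /set_mem [_ l1] /set_mem [_ l2].
  by move: xr; rewrite (level_uniq l1 l2) dr.
rewrite key ?divisors_uniq //.
set G := fset_set (@Sset n' ell).
have finS := Sset_finite n' ell hell.
have UG : \bigcup_(d <- divisors ell) F d `<=` G.
  apply/bigfcupsP => d dE _; apply/fsubsetP => Q.
  have dd : d %| ell by rewrite dvdn_divisors.
  rewrite /F /G !in_fset_set //; last by apply: finO.
  move=> /set_mem QO; apply/mem_set; exact: (O_sub _ dd).
apply: (leq_trans (fsubset_leq_card UG)).
have injG : {in G &, injective (enc ell)}.
  move=> Q Q'; rewrite /G !in_fset_set // => /set_mem SQ /set_mem SQ'; exact: enc_inj.
move/card_in_imfsetP/eqP: injG => <-.
rewrite -(card_TT n' ell) -(card_finset (predT : pred (@TT n' ell))).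
apply: fsubset_leq_card; apply/fsubsetP => t _; by rewrite in_fset inE.
Qed.
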